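(* Let $h,n\geq2$ and let $U\leq G$ be regular. Then: (i) $O(U)$ is regular; (ii) $\mathcal{F}^U=\mathcal{F}^{O(U)}$; (iii) $\bigcap_{F\in\mathcal{F}^U}G(F)=O(U)$.
   Context: Permutations compose as $(\sigma\tau)(x)=\sigma(\tau(x))$. Let $G=S_h\times S_n$ and $\mathcal{P}=(S_n)^h$ (preference profiles), with $G$ acting by $(p^{(\varphi,\psi)})_i=\psi\,p_{\varphi^{-1}(i)}$; for $U\leq G$, $p^U=\{p^g:g\in U\}$. $U\leq G$ is regular if for every $p\in\mathcal{P}$, $\{g\in U:p^g=p\}\subseteq S_h\times\{id\}$. A social preference function is any $F:\mathcal{P}\to S_n$; $\mathcal{F}^U$ is the set of $U$-symmetric ones ($F(p^{(\varphi,\psi)})=\psi F(p)$ for all $p$ and $(\varphi,\psi)\in U$), and $G(F)=\{(\varphi,\psi)\in G: F(p^{(\varphi,\psi)})=\psi F(p)\ \forall p\}$. For regular $U$, let $\mathcal{A}(U)$ be the set of regular subgroups $V\leq G$ with $V\geq U$ and $p^V\subseteq p^U$ for all $p\in\mathcal{P}$, and let the orbit extension $O(U)=\langle\mathcal{A}(U)\rangle$ be the subgroup generated by them. *)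

(* Defs.v *)
From mathcomp Require Import all_boot all_fingroup.
Set Implicit Arguments. Unset Strict Implicit. Unset Printing Implicit Defensive.
Local Open Scope group_scope.

(* G = S_h x S_n, as the external direct product finGroupType (componentwise). *)
Definition Gt (h n : nat) := ({perm 'I_h} * {perm 'I_n})%type.
Definition Prof (h n : nat) := {ffun 'I_h -> {perm 'I_n}}.
Definition SPF (h n : nat) := {ffun Prof h n -> {perm 'I_n}}.

(* NB: mathcomp's (s * t) x = t (s x), i.e. s * t is the composition t o s. *)
Definition pact h n (p : Prof h n) (g : Gt h n) : Prof h n :=
  [ffun i => p ((g.1)^-1 i) * g.2].

Definition porbit_by h n (U : {set Gt h n}) (p : Prof h n) : {set Prof h n} :=
  [set pact p g | g in U].

Definition regular h n (U : {set Gt h n}) : bool :=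
  [forall p : Prof h n, [set g in U | pact p g == p] \subset [set g : Gt h n | g.2 == 1]].

Definition symmetric h n (U : {set Gt h n}) (F : SPF h n) : bool :=
  [forall p : Prof h n, forall g in U, F (pact p g) == F p * g.2].

Definition FU h n (U : {set Gt h n}) : {set SPF h n} := [set F | symmetric U F].

Definition GF h n (F : SPF h n) : {set Gt h n} :=
  [set g : Gt h n | [forall p : Prof h n, F (pact p g) == F p * g.2]].

Definition inA h n (U V : {set Gt h n}) : bool :=
  [&& regular V, U \subset V & [forall p : Prof h n, porbit_by V p \subset porbit_by U p]].

Definition Oext h n (U : {set Gt h n}) : {set Gt h n} :=
  << \bigcup_(V : {group Gt h n} | inA U V) V >>.

(* Main.v *)
Require Import Defs.
From mathcomp Require Import all_boot all_fingroup.
Set Implicit Arguments. Unset Strict Implicit. Unset Printing Implicit Defensive.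
Local Open Scope group_scope.

Section S.
Variables h n : nat.
Implicit Types (p q r : Prof h n) (g x y u : Gt h n).

Lemma pactM p x y : pact p (x * y) = pact (pact p x) y.
Proof. by apply/ffunP => i; rewrite !ffunE /= invMg permM mulgA. Qed.

Lemma pact1 p : pact p 1 = p.
Proof. by apply/ffunP => i; rewrite ffunE /= invg1 perm1 mulg1. Qed.

Lemma pactK p g : pact (pact p g) g^-1 = p.
Proof. by rewrite -pactM mulgV pact1. Qed.

Lemma regP (V : {set Gt h n}) : regular V -> forall p g, g \in V -> pact p g = p -> g.2 = 1.
Proof.
move=> /forallP R p g gV e; have /subsetP := R p; move=> /(_ g).
by rewrite !inE gV e eqxx /= => /(_ isT) /eqP.
Qed.

Lemma reg_eq (V : {group Gt h n}) : regular V -> forall p x y, x \in V -> y \in V ->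
  pact p x = pact p y -> x.2 = y.2.
Proof.
move=> R p x y xV yV e.
have k2 : (x * y^-1).2 = 1.
  by apply: (regP R (p:=p)); rewrite ?groupM ?groupV // pactM e pactK.
rewrite -(mulgKV y.2 x.2); have -> : x.2 * y.2^-1 = 1 by exact: k2.
by rewrite mul1g.
Qed.

Definition PU (U : {set Gt h n}) : {set Gt h n} :=
  [set g : Gt h n | [forall p, [exists u in U, (pact p g == pact p u) && (g.2 == u.2)]]].

Lemma PU_group (U : {group Gt h n}) : group_set (PU U).
Proof.
apply/group_setP; split.
  rewrite inE; apply/forallP => p; apply/existsP; exists 1.
  by rewrite !eqxx !andbT; apply: group1.
move=> x y; rewrite !inE => /forallP Hx /forallP Hy; apply/forallP => p.
have /existsP [u /and3P [uU /eqP e1 /eqP e2]] := Hx p.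
have /existsP [v /and3P [vU /eqP f1 /eqP f2]] := Hy (pact p u).
apply/existsP; exists (u * v); rewrite groupM //.
by rewrite !pactM e1 f1 /= e2 f2 !eqxx.
Qed.

Canonical PU_grp (U : {group Gt h n}) := Group (PU_group U).

Lemma inA_PU (U V : {group Gt h n}) : inA U V -> V \subset PU U.
Proof.
move=> /and3P [RV sUV /forallP O]; apply/subsetP => g gV; rewrite inE.
apply/forallP => p.
have : pact p g \in porbit_by V p by apply/imsetP; exists g.
move/(subsetP (O p)) => /imsetP [u uU e].
apply/existsP; exists u; rewrite uU e eqxx /=.
by apply/eqP; apply: (reg_eq RV (p:=p) gV (subsetP sUV u uU) e).
Qed.

Lemma inAUU (U : {group Gt h n}) : regular U -> inA U U.
Proof. by move=> R; rewrite /inA R subxx; apply/forallP => p. Qed.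

Lemma O_PU (U : {group Gt h n}) : Oext U \subset PU U.
Proof.
rewrite /Oext gen_subG; apply/bigcupsP => V; exact: inA_PU.
Qed.

Lemma U_O (U : {group Gt h n}) : regular U -> U \subset Oext U.
Proof.
move=> R; apply: sub_gen; exact: (bigcup_sup U (inAUU R)).
Qed.

Lemma PU_GF (U : {group Gt h n}) (F : SPF h n) : F \in FU U -> PU U \subset GF F.
Proof.
rewrite inE => /forallP S; apply/subsetP => g; rewrite !inE => /forallP P.
apply/forallP => p; have /existsP [u /and3P [uU /eqP e1 /eqP e2]] := P p.
by rewrite e1 e2; have /forall_inP := S p; apply.
Qed.

Lemma GF_group (F : SPF h n) : group_set (GF F).
Proof.
apply/group_setP; split.
  by rewrite inE; apply/forallP => p; rewrite pact1 mulg1.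
move=> x y; rewrite !inE => /forallP Hx /forallP Hy; apply/forallP => p.
by rewrite pactM (eqP (Hy _)) (eqP (Hx _)) /= mulgA.
Qed.

Canonical GF_grp (F : SPF h n) := Group (GF_group F).

Lemma orb_closed (U : {group Gt h n}) p r u : r \in porbit_by U p -> u \in U ->
  pact r u \in porbit_by U p.
Proof.
move=> /imsetP [v vU ->] uU; apply/imsetP; exists (v * u); rewrite ?groupM //.
by rewrite pactM.
Qed.

Lemma orb_self (U : {group Gt h n}) p : p \in porbit_by U p.
Proof. by apply/imsetP; exists 1; rewrite ?group1 ?pact1. Qed.

Lemma orb_eq (U : {group Gt h n}) q u : u \in U -> porbit_by U (pact q u) = porbit_by U q.
Proof.
move=> uU; apply/eqP; rewrite eqEsubset; apply/andP; split; apply/subsetP => r.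
  move=> /imsetP [v vU ->]; rewrite -pactM; apply: orb_closed (orb_self _ _) _.
  by rewrite groupM.
move=> /imsetP [v vU ->]; rewrite -{1}(pactK q u) -pactM.
apply: orb_closed (orb_self _ _) _; by rewrite groupM ?groupV.
Qed.

Definition rep (U : {set Gt h n}) q := odflt q [pick r in porbit_by U q].
Definition uq (U : {set Gt h n}) q := odflt 1 [pick u in U | pact (rep U q) u == q].
Definition Fc (U : {set Gt h n}) (c : Prof h n -> {perm 'I_n}) : SPF h n :=
  [ffun q => c q * (uq U q).2].

Lemma rep_eq (U : {group Gt h n}) q u : u \in U -> rep U (pact q u) = rep U q.
Proof. move=> uU; rewrite /rep orb_eq //; case: pickP => //= H.
by have := H q; rewrite orb_self. Qed.

Lemma uqP (U : {group Gt h n}) q : uq U q \in U /\ pact (rep U q) (uq U q) = q.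
Proof.
rewrite /uq; case: pickP => [u /andP [uU /eqP e] | H] //=.
exfalso; move: H; rewrite /rep; case: pickP => [r rO | H0] /=.
  move: rO => /imsetP [v vU ->] /(_ v^-1); by rewrite groupV vU pactK eqxx.
by have := H0 q; rewrite orb_self.
Qed.

Lemma Fc_sym (U : {group Gt h n}) c : regular U ->
  (forall q u, u \in U -> c (pact q u) = c q) -> Fc U c \in FU U.
Proof.
move=> R cC; rewrite inE; apply/forallP => q; apply/forall_inP => u uU.
rewrite !ffunE cC // -mulgA; apply/eqP; congr (_ * _).
have [aU ea] := uqP U q; have [bU eb] := uqP U (pact q u).
rewrite rep_eq // in eb.
have -> : (uq U q).2 * u.2 = (uq U q * u).2 by [].
apply: (reg_eq R (p := rep U q)); rewrite ?groupM //.
by rewrite eb pactM ea.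
Qed.

Lemma exists_neq (s : {perm 'I_n}) : (2 <= n)%N -> exists t, t != s.
Proof.
move=> hn; case: (eqVneq s 1) => [-> | ne]; last by exists 1; rewrite eq_sym.
have h0 : (0 < n)%N by apply: leq_trans hn.
exists (tperm (Ordinal h0) (Ordinal hn)); apply/eqP => H.
have := tpermL (Ordinal h0) (Ordinal hn); rewrite H perm1 => /(congr1 val) //.
Qed.

End S.

Theorem mainTheorem15 (h n : nat) (hh : (2 <= h)%N) (hn : (2 <= n)%N)
  (U : {group Gt h n}) (hU : regular U) :
  [/\ regular (Oext U),
      FU U = FU (Oext U) &
      \bigcap_(F in FU U) GF F = Oext U].
Proof.
have OGF : forall F, F \in FU U -> Oext U \subset GF F.
  by move=> F FF; apply: subset_trans (O_PU U) (PU_GF FF).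
split.
- apply/forallP => p; apply/subsetP => g; rewrite !inE => /andP [gO /eqP e].
  have := subsetP (O_PU U) g gO; rewrite inE => /forallP /(_ p).
  move=> /existsP [u /and3P [uU /eqP e1 /eqP e2]].
  by rewrite e2 (regP hU (p := p)) // -e1.
- apply/setP => F; apply/idP/idP => FF.
    rewrite inE; apply/forallP => p; apply/forall_inP => g gO.
    by have := subsetP (OGF F FF) g gO; rewrite inE => /forallP.
  move: FF; rewrite !inE => /forallP S; apply/forallP => p; apply/forall_inP => g gU.
  by have /forall_inP := S p; apply; apply: (subsetP (U_O hU)).
apply/eqP; rewrite eqEsubset; apply/andP; split; last first.
  by apply/bigcapsP => F FF; apply: OGF.
set W := \bigcap_(F in FU U) GF F.
have sUW : U \subset W.
  apply/bigcapsP => F; rewrite !inE => /forallP S; apply/subsetP => g gU.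
  by rewrite inE; apply/forallP => p; have /forall_inP := S p; apply.
have F1 : Fc U (fun _ => 1) \in FU U by apply: Fc_sym.
have inW : forall F, F \in FU U -> forall g p, g \in W -> F (pact p g) = F p * g.2.
  move=> F FF g p gW; have := bigcapP gW F FF; rewrite inE => /forallP /(_ p) /eqP //.
have AW : inA U [group of W].
  apply/and3P; split => //.
  - apply/forallP => p; apply/subsetP => g; rewrite !inE => /andP [gW /eqP e].
    have := inW _ F1 g p gW; rewrite e => /(congr1 (fun s => (Fc U (fun _ => 1) p)^-1 * s)).
    by rewrite mulVg mulKg => <-.
  - apply/forallP => p; apply/subsetP => q /imsetP [g gW ->].
    apply/negPn/negP => nq.
    have [t nt] := exists_neq ((uq U p).2 * g.2 * ((uq U (pact p g)).2)^-1) hn.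
    pose c := fun r : Prof h n => if r \in porbit_by U p then (1 : {perm 'I_n}) else t.
    have cC : forall r u, u \in U -> c (pact r u) = c r.
      move=> r u uU; rewrite /c; case: ifP => [ru | nru]; case: ifP => // rO.
        by rewrite -(pactK r u) orb_closed ?groupV in rO.
      by rewrite orb_closed in nru.
    have := inW _ (Fc_sym hU cC) g p gW; rewrite !ffunE /c (negbTE nq) orb_self mul1g.
    move=> e; move/eqP: nt; apply; by rewrite -e mulgK.
apply: sub_gen; exact: (bigcup_sup [group of W] AW).
Qed.
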